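(* Let $n\ge4$. $\mathbb G^n_S$ is the orthogonal direct sum of the $n$-dimensional subspace $\mathbb{CPI}^n_S$ and the $\frac{n(n-3)}2$-dimensional subspace $\mathbb C^n_S$. Every $\mathcal G\in\mathbb G^n_S$ has a unique decomposition $\mathcal G=\mathcal G_{cpi}+\mathcal G_{cyclic}$ with $\mathcal G_{cpi}\in\mathbb{CPI}^n_S$ and $\mathcal G_{cyclic}\in\mathbb C^n_S$, these being the orthogonal projections of $\mathcal G$ onto the two subspaces.
   Context: $\mathbb G^n_S$ is the space of complete undirected weighted graphs without loops on $V_1,\dots,V_n$ with edge weights $d_{i,j}=d_{j,i}$, identified with $\mathbb R^{\binom n2}$ with the standard inner product. $\mathbb{CPI}^n_S$ is the subspace of graphs with $d_{j,k}=\omega_j+\omega_k$ for some reals $\omega_1,\dots,\omega_n$ (the closed path independent graphs). $\mathbb C^n_S$ is the span of all vectors $\mathbf b^n_{i,j,k,s}$ (distinct $i,j,k,s$) having $d_{i,j}=1,d_{j,k}=-1,d_{k,s}=1,d_{s,i}=-1$ and all other entries 0. *)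

(* Defs.v *)
From HB Require Import structures.
From mathcomp Require Import all_boot all_order all_algebra.
Set Implicit Arguments. Unset Strict Implicit. Unset Printing Implicit Defensive.
Import Order.TTheory GRing.Theory Num.Theory.
Local Open Scope ring_scope.

(* Edges of the complete graph on vertices 'I_n: pairs (a,b) with a < b.
   Each unordered pair {V_a, V_b} appears exactly once. *)
Definition edge (n : nat) := {p : 'I_n * 'I_n | (p.1 < p.2)%N}.

Definition graphS (R : realFieldType) (n : nat) := {ffun edge n -> R^o}.

Definition same_edge (n : nat) (a b x y : 'I_n) : bool :=
  ((a == x) && (b == y)) || ((a == y) && (b == x)).

Definition gdot (R : realFieldType) (n : nat) (G H : graphS R n) : R :=
  \sum_(e : edge n) G e * H e.

Definition cpi_graph (R : realFieldType) (n : nat) (w : {ffun 'I_n -> R^o})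
  : graphS R n := [ffun e : edge n => w (val e).1 + w (val e).2].

Definition CPI_S (R : realFieldType) (n : nat) : {vspace graphS R n} :=
  limg (linfun (@cpi_graph R n)).

Definition bvec (R : realFieldType) (n : nat) (i j k s : 'I_n) : graphS R n :=
  [ffun e : edge n =>
     let a := (val e).1 in let b := (val e).2 in
     if same_edge a b i j then 1
     else if same_edge a b j k then -1
     else if same_edge a b k s then 1
     else if same_edge a b s i then -1
     else 0].

Definition distinct4 (n : nat) (q : 'I_n * 'I_n * 'I_n * 'I_n) : bool :=
  let: (i, j, k, s) := q in
  [&& i != j, i != k, i != s, j != k, j != s & k != s].

Definition C_S (R : realFieldType) (n : nat) : {vspace graphS R n} :=
  <<[seq (let: (i, j, k, s) := q in bvec R i j k s)
     | q <- enum (@distinct4 n)]>>%VS.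

(* Main.v *)
Require Import Defs.
From HB Require Import structures.
From mathcomp Require Import all_boot all_order all_algebra.
From mathcomp Require Import zify ring lra.
Import Order.TTheory GRing.Theory Num.Theory.
Set Implicit Arguments. Unset Strict Implicit. Unset Printing Implicit Defensive.
Local Open Scope ring_scope.
Section S.
Variables (R : realFieldType) (n : nat).
Lemma dimG : \dim (fullv : {vspace graphS R n}) = #|{: edge n}|.
Proof. by rewrite dimvf /dim /= muln1. Qed.
Lemma dimW : \dim (fullv : {vspace {ffun 'I_n -> R^o}}) = n.
Proof. by rewrite dimvf /dim /= card_ord muln1. Qed.

Lemma card_edge : (2 * #|{: edge n}| + n = n * n)%N.
Proof.
rewrite card_sig -sum1_card big_mkcond /=.
have E : forall P : pred ('I_n * 'I_n), (\sum_(p : 'I_n * 'I_n) (if P p then 1 else 0) = \sum_(p : 'I_n * 'I_n) P p)%N.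
  by move=> P; apply: eq_bigr => p _; case: (P p).
rewrite E -(pair_bigA _ (fun i j : 'I_n => nat_of_bool (i < j)%N)).
have Esw : (\sum_(i < n) \sum_(j < n) ((i < j)%N : nat) = \sum_(i < n) \sum_(j < n) ((j < i)%N : nat))%N.
  by rewrite exchange_big.
have Ediag : (\sum_(i < n) \sum_(j < n) ((i == j) : nat) = n)%N.
  rewrite -[RHS]card_ord -sum1_card; apply: eq_bigr => i _.
  by rewrite (bigD1 i) //= eqxx big1 // => j /negbTE; rewrite eq_sym => ->.
rewrite mul2n -addnn.
set A := (\big[_/_]_i _)%N.
transitivity (\sum_(i < n) \sum_(j < n) ((i < j)%N + (j < i)%N + (i == j)) : nat)%N.
  under [RHS]eq_bigr => i _ do rewrite big_split /= big_split /=.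
  by rewrite big_split /= big_split /= Ediag -Esw.
transitivity (\sum_(i<n) \sum_(j<n) 1)%N; last first.
  by rewrite sum_nat_const card_ord sum_nat_const card_ord muln1.
apply: eq_bigr => i _; apply: eq_bigr => j _.
case: (ltngtP i j) => //= h; rewrite -val_eqE /=.
- by rewrite ltn_eqF.
- by rewrite gtn_eqF.
- by rewrite h eqxx.
Qed.

Local Notation se := (@same_edge n).
Definition dl (p q : 'I_n) : graphS R n :=
  [ffun e : edge n => ((se (val e).1 (val e).2 p q) : nat)%:R].
Definition de (e0 : edge n) : graphS R n := [ffun e : edge n => ((e == e0) : nat)%:R].
Definition vd (x : 'I_n) : {ffun 'I_n -> R^o} := [ffun v => ((v == x) : nat)%:R].

Lemma edge_neq (e : edge n) : (val e).1 != (val e).2.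
Proof. by rewrite -val_eqE /= ltn_eqF // (valP e). Qed.

Lemma se_sym a b p q : se a b p q = se a b q p.
Proof. by rewrite /se orbC. Qed.

Lemma dl_sym p q : dl p q = dl q p.
Proof. by apply/ffunP => e; rewrite !ffunE se_sym. Qed.

Lemma dl_pp p : dl p p = 0.
Proof.
apply/ffunP => e; rewrite !ffunE /se orbb.
case: eqP => [h|] //=; case: eqP => [h'|] //=.
by move: (edge_neq e); rewrite h h' eqxx.
Qed.

Lemma se_uniq a b p q p' q' : se a b p q -> se a b p' q' -> se p q p' q'.
Proof.
rewrite /se => /orP[/andP[/eqP<- /eqP<-]|/andP[/eqP<- /eqP<-]]
  /orP[/andP[/eqP<- /eqP<-]|/andP[/eqP<- /eqP<-]]; by rewrite !eqxx ?orbT.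
Qed.

Lemma se_edge (e e0 : edge n) : se (val e).1 (val e).2 (val e0).1 (val e0).2 = (e == e0).
Proof.
rewrite /se; case: e e0 => [[a b] /= hab] [[c d] /= hcd].
rewrite [RHS](_ : _ = ((a, b) == (c, d))) // xpair_eqE; case: (boolP ((a == c) && (b == d))) => //= _.
apply/negbTE; apply/negP => /andP[/eqP ad /eqP bc].
by move: hab hcd; rewrite ad bc; lia.
Qed.

Lemma dl_de (e : edge n) : dl (val e).1 (val e).2 = de e.
Proof. by apply/ffunP => e'; rewrite !ffunE se_edge. Qed.

Lemma edgeP p q : p != q -> exists e : edge n,
  (forall w : {ffun 'I_n -> R^o}, cpi_graph w e = w p + w q) /\ dl p q = de e.
Proof.
wlog lt_pq : p q / (p < q)%N.
  move=> H pq; case: (ltngtP p q) => h.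
  - exact: H.
  - have qp : q != p by rewrite eq_sym.
    have [e [H1 H2]] := H q p h qp.
    by exists e; split; [move=> w; rewrite H1 addrC | rewrite dl_sym].
  - by move: pq; rewrite -val_eqE /= h eqxx.
move=> _; exists (exist _ (p, q) lt_pq); split; first by move=> w; rewrite ffunE.
by rewrite -(dl_de (exist _ (p, q) lt_pq)).
Qed.

Lemma gdot_de (x : graphS R n) e : gdot x (de e) = x e.
Proof.
rewrite /gdot (bigD1 e) //= big1 ?addr0 => [|e' /negbTE]; rewrite ffunE ?eqxx ?mulr1 //.
by move=> ->; rewrite mulr0.
Qed.

Lemma gdotC (x y : graphS R n) : gdot x y = gdot y x.
Proof. by apply: eq_bigr => e _; rewrite mulrC. Qed.

Lemma gdot_lin (x : graphS R n) a (y z : graphS R n) : gdot x (a *: y + z) = a * gdot x y + gdot x z.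
Proof.
rewrite /gdot mulr_sumr -big_split /=; apply: eq_bigr => e _.
by rewrite !ffunE mulrDr mulrCA.
Qed.

Lemma gdotZ (x : graphS R n) a (y : graphS R n) : gdot x (a *: y) = a * gdot x y.
Proof. by rewrite /gdot mulr_sumr; apply: eq_bigr => e _; rewrite !ffunE mulrCA. Qed.

Lemma gdot0 (x : graphS R n) : gdot x 0 = 0.
Proof. by rewrite /gdot big1 // => e _; rewrite ffunE mulr0. Qed.

Lemma gdotD (x y z : graphS R n) : gdot x (y + z) = gdot x y + gdot x z.
Proof. by rewrite /gdot -big_split; apply: eq_bigr => e _; rewrite ffunE mulrDr. Qed.
Lemma gdotN (x y : graphS R n) : gdot x (- y) = - gdot x y.
Proof. by rewrite /gdot -sumrN; apply: eq_bigr => e _; rewrite ffunE mulrN. Qed.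
Lemma gdotB (x y z : graphS R n) : gdot x (y - z) = gdot x y - gdot x z.
Proof. by rewrite gdotD gdotN. Qed.
Lemma gdot_sum (x : graphS R n) (I : finType) (F : I -> graphS R n) :
  gdot x (\sum_i F i) = \sum_i gdot x (F i).
Proof.
elim/big_rec2: _ => [|i y1 y2 _ <-]; first exact: gdot0.
by rewrite gdotD.
Qed.

Section Dist.
Variables i j k s : 'I_n.
Hypothesis hd : distinct4 (i, j, k, s).

Lemma bvecE : bvec R i j k s = dl i j - dl j k + dl k s - dl s i.
Proof.
move: hd => /and5P[ij ik iS jk /andP[js ks]].
have F p q p' q' a b : se p q p' q' = false -> se a b p q -> se a b p' q' = false.
  by move=> h h1; apply/negbTE/negP => h2; move: (se_uniq h1 h2); rewrite h.
have X : [/\ se i j j k = false, se i j k s = false, se i j s i = false &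
   [/\ se j k k s = false, se j k s i = false & se k s s i = false]].
  rewrite /same_edge !eqxx /= !andbT.
  rewrite ?(negbTE ik) ?(negbTE js) ?(negbTE jk) ?(negbTE iS) ?(negbTE ij) ?(negbTE ks) ?andbF //=.
  by rewrite eq_sym (negbTE ik).
apply/ffunP => e; rewrite !ffunE /=.
have [X1 X2 X3 [X4 X5 X6]] := X.
set a := (val e).1; set b := (val e).2.
case: (boolP (se a b i j)) => h1.
  by rewrite (F _ _ _ _ _ _ X1 h1) (F _ _ _ _ _ _ X2 h1) (F _ _ _ _ _ _ X3 h1) /= ?(subr0,addr0,sub0r,add0r).
case: (boolP (se a b j k)) => h2.
  by rewrite (F _ _ _ _ _ _ X4 h2) (F _ _ _ _ _ _ X5 h2) /= ?(subr0,addr0,sub0r,add0r).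
case: (boolP (se a b k s)) => h3.
  by rewrite (F _ _ _ _ _ _ X6 h3) /= ?(subr0,addr0,sub0r,add0r).
by rewrite /=; case: (se a b s i) => /=; rewrite ?(subr0,addr0,sub0r,add0r).
Qed.

Lemma orth_b (w : {ffun 'I_n -> R^o}) : gdot (cpi_graph w) (bvec R i j k s) = 0.
Proof.
move: hd => /and5P[ij ik iS jk /andP[js ks]].
have G p q : p != q -> gdot (cpi_graph w) (dl p q) = w p + w q.
  by move=> pq; have [e [H1 ->]] := edgeP pq; rewrite gdot_de H1.
rewrite bvecE !(gdotB, gdotD) !G //; first ring.
all: by rewrite eq_sym.
Qed.
End Dist.

Lemma cpi_lin : linear (@cpi_graph R n).
Proof. move=> a u v; apply/ffunP => e; by rewrite !ffunE scalerDr addrACA. Qed.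
Definition cpiL : {linear {ffun 'I_n -> R^o} -> graphS R n} :=
  HB.pack (@cpi_graph R n) (GRing.isLinear.Build _ _ _ _ (@cpi_graph R n) cpi_lin).

Lemma memCPI x : reflect (exists w, x = cpi_graph w) (x \in CPI_S R n).
Proof.
apply: (iffP memv_imgP) => [[w _ ->]|[w ->]]; exists w => //.
  by rewrite (lfunE cpiL).
by rewrite memvf.
by rewrite (lfunE cpiL).
Qed.

Lemma cpi_in w : cpi_graph w \in CPI_S R n.
Proof. by apply/memCPI; exists w. Qed.

Lemma bvec_in i j k s : distinct4 (i, j, k, s) -> bvec R i j k s \in C_S R n.
Proof.
move=> hd; apply: memv_span; apply/mapP; exists (i, j, k, s) => //.
by rewrite mem_enum.
Qed.

Lemma orth x y : x \in CPI_S R n -> y \in C_S R n -> gdot x y = 0.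
Proof.
move=> /memCPI[w ->] /coord_span ->.
rewrite gdot_sum big1 // => i _.
rewrite gdotZ.
set b := _`_i.
have : b \in [seq (let: (i, j, k, s) := q in bvec R i j k s) | q <- enum (@distinct4 n)].
  by rewrite /b mem_nth // size_tuple.
case/mapP => [[[[i1 j1] k1] s1]]; rewrite mem_enum => hd ->.
by rewrite orth_b // mulr0.
Qed.

Lemma gdot_pos (x : graphS R n) : gdot x x = 0 -> x = 0.
Proof.
move=> h; apply/ffunP => e; rewrite ffunE.
have := @psumr_eq0P R _ xpredT (fun e => x e * x e) (fun e _ => sqr_ge0 (x e : R)) h e isT.
by move/eqP; rewrite mulf_eq0 orbb => /eqP.
Qed.

Lemma cap0 : (CPI_S R n :&: C_S R n)%VS = 0%VS.
Proof.
apply/eqP; rewrite -subv0; apply/subvP => x; rewrite memv_cap memv0 => /andP[h1 h2].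
by apply/eqP/gdot_pos/orth.
Qed.

Lemma three (v : 'I_n) : (3 <= n)%N -> exists u t : 'I_n, [/\ u != v, t != v & u != t].
Proof.
move=> h3.
have h0 : (0 < n)%N by lia.
have h1 : (1 < n)%N by lia.
have h2 : (2 < n)%N by lia.
case: (eqVneq (val v) 0%N) => [v0|v0].
  by exists (Ordinal h1), (Ordinal h2); rewrite -!val_eqE /= v0.
case: (eqVneq (val v) 1%N) => [v1|v1].
  by exists (Ordinal h0), (Ordinal h2); rewrite -!val_eqE /= v1.
by exists (Ordinal h0), (Ordinal h1); rewrite -!val_eqE /= eq_sym v0 eq_sym v1.
Qed.

Lemma cpi_inj (w : {ffun 'I_n -> R^o}) : (3 <= n)%N -> cpi_graph w = 0 -> w = 0.
Proof.
move=> h3 h; apply/ffunP => v; rewrite ffunE.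
have [u [t [uv tv ut]]] := three v h3.
have E p q : p != q -> (w p + w q : R) = 0.
  by move=> pq; have [e [H1 _]] := edgeP pq; rewrite -H1 h ffunE.
have e1 := E _ _ uv; have e2 := E _ _ tv; have e3 := E _ _ ut.
move: e1 e2 e3; rewrite /=.
set a := (w v : R); set b := (w u : R); set c := (w t : R) => e1 e2 e3.
lra.
Qed.

Lemma dimCPI : (3 <= n)%N -> \dim (CPI_S R n) = n.
Proof.
move=> h3; rewrite /CPI_S limg_dim_eq ?dimW //.
apply/eqP; rewrite -subv0; apply/subvP => w; rewrite memv_cap memv_ker memv0 (lfunE cpiL).
by case/andP => _ /eqP h; apply/eqP/cpi_inj.
Qed.

Lemma sum_eq1 (T : finType) (b : T) : (\sum_(u : T) ((b == u) : nat) = 1)%N.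
Proof. by rewrite (bigD1 b) //= eqxx big1 // => u /negbTE; rewrite eq_sym => ->. Qed.

Lemma cpi_star x : \sum_u dl x u = cpi_graph (vd x).
Proof.
apply/ffunP => e; rewrite sum_ffunE !ffunE.
under eq_bigr => u _ do rewrite ffunE.
move: (edge_neq e); case: e => [[a b] /= hab] ab.
rewrite -natr_sum -natrD; congr (_%:R).
rewrite /same_edge; case: (eqVneq a x) => [ax|ax] /=.
  have bx : (b == x) = false by apply/negbTE; rewrite -ax eq_sym.
  rewrite bx /=; under eq_bigr => u _ do rewrite andbF orbF.
  exact: sum_eq1.
rewrite add0n; case: (b == x).
  under eq_bigr => u _ do rewrite andbT.
  exact: (sum_eq1 a).
by rewrite big1 // => u _; rewrite andbF.
Qed.

Local Notation U := (CPI_S R n + C_S R n)%VS.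

Lemma cpiB (a b : {ffun 'I_n -> R^o}) : cpi_graph (a - b) = cpi_graph a - cpi_graph b.
Proof. by apply/ffunP => e; rewrite !ffunE opprD addrACA. Qed.

Lemma unscale (v : graphS R n) k : (0 < k)%N -> v *+ k \in U -> v \in U.
Proof.
move=> k0 h; have -> : v = (k%:R)^-1 *: (v *+ k).
  by rewrite -scaler_nat scalerA mulVf ?scale1r // pnatr_eq0 -lt0n.
exact: memvZ.
Qed.

Lemma move x y z : x != y -> z != y -> x != z -> dl x y - dl z y \in U.
Proof.
move=> xy zy xz.
set d := dl x y - dl z y.
pose g u := dl x u - dl z u.
have Hs : \sum_u g u \in U.
  rewrite /g sumrB !cpi_star -cpiB; apply: (subvP (addvSl _ _)); exact: cpi_in.
have Hsplit : \sum_u g u = g x + (g z + \sum_(u | (u != x) && (u != z)) g u).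
  rewrite (bigD1 x) //= (bigD1 z) /=; last by rewrite eq_sym.
  by [].
have gxz : g x + g z = 0 by rewrite /g !dl_pp (dl_sym x z) sub0r subr0 addNr.
have HP : \sum_(u | (u != x) && (u != z)) g u \in U.
  by move: Hs; rewrite Hsplit addrA gxz add0r.
have Hb : \sum_(u | (u != x) && (u != z)) (g u - d) \in U.
  apply: memv_suml => u /andP[ux uz]; apply: (subvP (addvSr _ _)).
  case: (eqVneq u y) => [->|uy]; first by rewrite /g /d subrr mem0v.
  have -> : g u - d = bvec R u x y z.
    rewrite bvecE; last by rewrite /distinct4 ux uy uz xy xz (eq_sym y z) zy.
    rewrite /g /d (dl_sym u x) (dl_sym y z).
    apply/ffunP => e; rewrite !ffunE; ring.
  by apply: bvec_in; rewrite /distinct4 ux uy uz xy xz (eq_sym y z) zy.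
have Hc : \sum_(u | (u != x) && (u != z)) d = d *+ #|[pred u | (u != x) && (u != z)]|.
  by rewrite -sumr_const; apply: eq_bigl => u; rewrite inE.
apply: (@unscale _ #|[pred u | (u != x) && (u != z)]|).
  by apply/card_gt0P; exists y; rewrite inE /= (eq_sym y x) (eq_sym y z) xy zy.
rewrite -Hc (_ : \sum_(u | _) d = \sum_(u | (u != x) && (u != z)) g u -
   \sum_(u | (u != x) && (u != z)) (g u - d)); first exact: memvB.
by rewrite [X in _ = _ - X]sumrB opprB addrC subrK.
Qed.

Lemma mv' a b c : a != b -> c != b -> dl a b - dl c b \in U.
Proof.
move=> ab cb; case: (eqVneq a c) => [->|ac]; first by rewrite subrr mem0v.
exact: move.
Qed.

Lemma equiv a b c d : a != b -> c != d -> dl a b - dl c d \in U.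
Proof.
move=> ab cd; case: (eqVneq b c) => [bc|bc].
  subst c; rewrite (dl_sym b d); apply: mv' => //; by rewrite eq_sym.
have -> : dl a b - dl c d = (dl a b - dl c b) + (dl b c - dl d c).
  by rewrite (dl_sym b c) (dl_sym d c) addrA subrK.
apply: memvD; apply: mv' => //; by rewrite eq_sym.
Qed.

Lemma de_in e : de e \in U.
Proof.
have key : \sum_(e' : edge n) (de e' - de e) \in U.
  by apply: memv_suml => e' _; rewrite -!dl_de; apply: equiv; exact: edge_neq.
have ones : \sum_(e' : edge n) de e' = cpi_graph [ffun _ => 2^-1].
  apply/ffunP => e''; rewrite sum_ffunE !ffunE.
  under eq_bigr => e' _ do rewrite ffunE.
  rewrite -natr_sum (_ : (\sum_e' _ = 1)%N); last first.
    by rewrite -(sum_eq1 e''); apply: eq_bigr.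
  have h2 : (2 : R) != 0 by rewrite pnatr_eq0.
  by rewrite -mulr2n -[_ *+ 2]mulr_natr mulVf.
rewrite sumrB ones sumr_const in key.
apply: (@unscale _ #|{: edge n}|).
  by apply/card_gt0P; exists e.
rewrite (_ : _ *+ _ = cpi_graph [ffun _ => 2^-1] - (cpi_graph [ffun _ => 2^-1] - de e *+ #|{: edge n}|)).
  apply: memvB => //; apply: (subvP (addvSl _ _)); exact: cpi_in.
by rewrite opprB addrC subrK.
Qed.

Lemma full : U = fullv.
Proof.
apply/eqP; rewrite eqEsubv subvf /=; apply/subvP => x _.
have -> : x = \sum_e x e *: de e.
  apply/ffunP => e; rewrite sum_ffunE (bigD1 e) //= big1 ?addr0.
    by rewrite !ffunE eqxx /= -[RHS]/(x e * 1) mulr1.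
  by move=> e' /negbTE ne; rewrite !ffunE eq_sym ne /= -[LHS]/(x e' * 0) mulr0.
by apply: memv_suml => e _; apply: memvZ; exact: de_in.
Qed.
End S.
Theorem theorem11 (R : realFieldType) (n : nat) : (4 <= n)%N ->
  [/\ (\dim (CPI_S R n) = n /\ \dim (C_S R n) = (n * (n - 3)) %/ 2)%N,
      (CPI_S R n + C_S R n)%VS = fullv,
      directv (CPI_S R n + C_S R n)%VS,
      (forall x y : graphS R n, x \in CPI_S R n -> y \in C_S R n -> gdot x y = 0)
    & forall G : graphS R n,
      exists Gcpi : graphS R n, exists Gcyc : graphS R n,
        [/\ [/\ Gcpi \in CPI_S R n, Gcyc \in C_S R n & G = Gcpi + Gcyc],
            (forall Gcpi' Gcyc' : graphS R n, Gcpi' \in CPI_S R n ->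
               Gcyc' \in C_S R n -> G = Gcpi' + Gcyc' ->
               Gcpi' = Gcpi /\ Gcyc' = Gcyc),
            (forall u : graphS R n, u \in CPI_S R n -> gdot (G - Gcpi) u = 0)
          & (forall u : graphS R n, u \in C_S R n -> gdot (G - Gcyc) u = 0)]].
Proof.
move=> h4.
have h3 : (3 <= n)%N by lia.
have dC := dimCPI R h3.
have Fu := full R n.
have cap := cap0 R n.
have dsum := dimv_disjoint_sum cap.
rewrite Fu dimG dC in dsum.
have ce := card_edge n.
split.
- split => //.
  have E : (n * (n - 3) = \dim (C_S R n) * 2)%N by nia.
  by rewrite E mulnK.
- exact: Fu.
- by apply/directv_addP.
- by move=> x y; exact: orth.
move=> G.
have : G \in (CPI_S R n + C_S R n)%VS by rewrite Fu memvf.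
case/memv_addP => a Ha [b Hb ->].
exists a, b; split => //.
- move=> a' b' Ha' Hb' E.
  have D : a' - a = b - b'.
    apply: (addIr b'); apply: (addrI a).
    by rewrite subrK addrA [a + _]addrC subrK E.
  have : a' - a \in (CPI_S R n :&: C_S R n)%VS.
    by rewrite memv_cap memvB //= D memvB.
  rewrite cap memv0 subr_eq0 => /eqP aa; split => //.
  by move: D; rewrite aa subrr => /eqP; rewrite eq_sym subr_eq0 => /eqP.
- by move=> u Hu; rewrite [a + b - a]addrC addKr gdotC; exact: orth.
- by move=> u Hu; rewrite addrK; exact: orth.
Qed.
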